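(* Assume $\|\varphi\|_{C^2([a,b])}<1$. Then there is a constant $C>0$ depending only on $\|w\|_{C^2([a,b])}$ such that, for every $s\in[0,1]$, every $x\in\mathbb R$ and every $0\le t\le t_0(s,x)$, $$|\partial_x\xi(t,x)-1|\le C\|\varphi\|_{C^2([a,b])},\qquad|\partial_x\eta(t,x)-w'(x)|\le C\|\varphi\|_{C^2([a,b])}.$$
   Context: Let $w\in C^3(\mathbb R)$ be periodic with $w>0$ on $[-1,1]$. Let $-1<a<b<1$ and let $\varphi:[a,b]\to\mathbb R$ be a polynomial with $\varphi^{(k)}(a)=\varphi^{(k)}(b)=0$ for $k=0,1,2,3$, extended by zero outside $[a,b]$. For $x\in\mathbb R$, $(\xi(t,x),\eta(t,x))$ is the unique global solution of $$\frac{d\xi}{dt}=-w'(\xi)\varphi(\xi)-(\eta-w(\xi))\varphi'(\xi),\quad\frac{d\eta}{dt}=\varphi(\xi),\quad \xi(0)=x,\ \eta(0)=w(x).$$ For $s\in[0,1]$, $t_0(s,x)\ge0$ denotes the first time $t\ge0$ with $\eta(t,x)=w(\xi(t,x))+s\varphi(\xi(t,x))$ (it exists and $t_0(s,x)\le s$). *)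

(* Defs.v *)
From Stdlib Require Import Reals List.
Import ListNotations.
Open Scope R_scope.

(* Polynomials as coefficient lists [c0; c1; ...; cn] (c0 + c1 x + ... ). *)
Definition peval (c : list R) (x : R) : R :=
  fold_right (fun a acc => a + x * acc) 0 c.

Fixpoint pderiv_aux (k : nat) (l : list R) : list R :=
  match l with
  | nil => nil
  | h :: t => INR k * h :: pderiv_aux (S k) t
  end.

Definition pderiv (c : list R) : list R :=
  match c with
  | nil => nil
  | _ :: t => pderiv_aux 1 t
  end.

Definition pderivn (k : nat) (c : list R) : list R := Nat.iter k pderiv c.

Definition ext_zero (p : R -> R) (a b x : R) : R :=
  if Rle_dec a x then (if Rle_dec x b then p x else 0) else 0.

(* phi = polynomial c on [a,b], extended by 0; phi' = its derivative
   (the derivative of the polynomial on [a,b], 0 outside; this is the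
   derivative of the extension thanks to the vanishing conditions). *)
Definition phi_ext (c : list R) (a b : R) : R -> R :=
  ext_zero (peval c) a b.
Definition dphi_ext (c : list R) (a b : R) : R -> R :=
  ext_zero (peval (pderiv c)) a b.

(* N is the sup-norm  max_{f in fs} sup_{[a,b]} |f|, i.e. the least upper bound
   of { |f x| : f in fs, x in [a,b] }.  With fs = [f; f'; f''] this is
   the C^2([a,b]) norm of f. *)
Definition is_sup_norm_on (fs : list (R -> R)) (a b N : R) : Prop :=
  is_lub (fun y => exists f x, In f fs /\ a <= x <= b /\ y = Rabs (f x)) N.

Definition is_first_time (xi eta : R -> R -> R) (w phi : R -> R)
    (s x t0 : R) : Prop :=
  0 <= t0 /\
  eta t0 x = w (xi t0 x) + s * phi (xi t0 x) /\
  (forall t, 0 <= t < t0 -> eta t x <> w (xi t x) + s * phi (xi t x)).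

(* Main.v *)
Require Import Defs.
From Stdlib Require Import Reals List Lra Psatz FunctionalExtensionality.
Import ListNotations.
From Coquelicot Require Import Coquelicot.
Open Scope R_scope.


Lemma dpl_ext (f g : R -> R) x l : (forall y, f y = g y) ->
  derivable_pt_lim f x l -> derivable_pt_lim g x l.
Proof. intros H D. assert (f = g) by (apply functional_extensionality; auto). subst; auto. Qed.

Lemma dpl_val f x l l' : derivable_pt_lim f x l -> l = l' -> derivable_pt_lim f x l'.
Proof. intros; subst; auto. Qed.

Lemma dpl_mult f g x a b : derivable_pt_lim f x a -> derivable_pt_lim g x b ->
  derivable_pt_lim (fun t => f t * g t) x (a * g x + f x * b).
Proof. intros. exact (derivable_pt_lim_mult f g x a b H H0). Qed.
Lemma dpl_plus f g x a b : derivable_pt_lim f x a -> derivable_pt_lim g x b ->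
  derivable_pt_lim (fun t => f t + g t) x (a + b).
Proof. intros. exact (derivable_pt_lim_plus f g x a b H H0). Qed.
Lemma dpl_minus f g x a b : derivable_pt_lim f x a -> derivable_pt_lim g x b ->
  derivable_pt_lim (fun t => f t - g t) x (a - b).
Proof. intros. exact (derivable_pt_lim_minus f g x a b H H0). Qed.
Lemma dpl_const c x : derivable_pt_lim (fun _ => c) x 0.
Proof. exact (derivable_pt_lim_const c x). Qed.
Lemma dpl_id x : derivable_pt_lim (fun t => t) x 1.
Proof. exact (derivable_pt_lim_id x). Qed.
Lemma dpl_comp f g x a b : derivable_pt_lim f x a -> derivable_pt_lim g (f x) b ->
  derivable_pt_lim (fun t => g (f t)) x (b * a).
Proof. intros. exact (derivable_pt_lim_comp f g x a b H H0). Qed.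
Lemma dpl_scal c f x a : derivable_pt_lim f x a ->
  derivable_pt_lim (fun t => c * f t) x (c * a).
Proof. intros. apply (dpl_val _ _ (0 * f x + c * a)); [|ring].
  apply dpl_mult; auto. apply dpl_const. Qed.
Lemma dpl_cont f x l : derivable_pt_lim f x l -> continuity_pt f x.
Proof. intros. apply derivable_continuous_pt. exists l. exact H. Qed.

Lemma dpl_exp_lin al u : derivable_pt_lim (fun t => exp (-(al*t))) u (exp (-(al*u)) * (-al)).
Proof. apply (dpl_comp (fun t => -(al*t)) exp). 
  apply (dpl_val _ _ (-(al*1))); [|ring].
  apply (dpl_ext (fun t => -1 * (al * t))); [intros; ring|].
  apply (dpl_val _ _ (-1 * (al*1))); [|ring]. apply dpl_scal. apply dpl_scal. apply dpl_id.
  apply derivable_pt_lim_exp. Qed.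

Lemma mvt_le (h h' : R -> R) T : 0 <= T ->
  (forall u, 0 <= u <= T -> derivable_pt_lim h u (h' u)) ->
  (forall u, 0 <= u <= T -> h' u <= 0) -> h T <= h 0.
Proof. intros HT D N. destruct (Req_dec T 0). subst; lra.
  destruct (MVT_cor2 h h' 0 T) as [c [E Hc]]; [lra| intros; apply D; lra|].
  assert (h' c <= 0) by (apply N; lra). nra. Qed.

Lemma gronwall V V' al ga T : 0 <= al -> 0 <= ga -> 0 <= T ->
  (forall u, 0 <= u <= T -> derivable_pt_lim V u (V' u)) ->
  (forall u, 0 <= u <= T -> V' u <= al * V u + ga) ->
  V T <= (V 0 + ga * T) * exp (al * T).
Proof. intros Hal Hga HT D B.
  set (h := fun u => V u * exp (-(al*u)) - ga * u).
  set (h' := fun u => V' u * exp (-(al*u)) + V u * (exp (-(al*u)) * (-al)) - ga * 1).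
  assert (h T <= h 0).
  { apply (mvt_le h h'); auto.
    - intros u Hu. unfold h, h'. apply dpl_minus. apply (dpl_mult V (fun t => exp (-(al*t)))). apply D; auto. apply (dpl_exp_lin al u).
      apply dpl_scal, dpl_id.
    - intros u Hu. unfold h'. assert (exp (-(al*u)) <= 1).
      { rewrite <- exp_0. destruct (Req_dec (al*u) 0). rewrite H, Ropp_0; lra.
        left; apply exp_increasing. nra. }
      assert (0 < exp (-(al*u))) by apply exp_pos. specialize (B u Hu). nra. }
  unfold h in H. rewrite Rmult_0_r, Ropp_0, exp_0 in H.
  assert (exp (-(al*T)) * exp (al*T) = 1) by (rewrite <- exp_plus; replace (-(al*T) + al*T) with 0 by ring; apply exp_0).
  assert (0 < exp (al*T)) by apply exp_pos.
  assert (V T * exp (-(al*T)) <= V 0 + ga * T) by lra.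
  apply Rmult_le_compat_r with (r := exp (al*T)) in H2; [|lra].
  rewrite Rmult_assoc, H0, Rmult_1_r in H2. exact H2. Qed.

Lemma linest p1 p2 d1 d2 L r T : 0 <= L -> 0 <= r -> 0 <= T <= 1 ->
  (forall u, 0 <= u <= T -> derivable_pt_lim p1 u (d1 u) /\ derivable_pt_lim p2 u (d2 u)) ->
  (forall u, 0 <= u <= T -> Rabs (d1 u) <= L * (Rabs (p1 u) + Rabs (p2 u)) + r /\
                            Rabs (d2 u) <= L * (Rabs (p1 u) + Rabs (p2 u)) + r) ->
  p1 T ^ 2 + p2 T ^ 2 <= (p1 0 ^ 2 + p2 0 ^ 2 + r ^ 2) * exp (4 * L + 2).
Proof. intros HL Hr HT D B.
  assert (G := gronwall (fun u => p1 u ^ 2 + p2 u ^ 2) (fun u => 2 * p1 u * d1 u + 2 * p2 u * d2 u)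
     (4*L+2) (r^2) T ltac:(lra) ltac:(nra) ltac:(lra)).
  simpl in G. 
  assert (H1 : p1 T ^ 2 + p2 T ^ 2 <= (p1 0 ^ 2 + p2 0 ^ 2 + r ^ 2 * T) * exp ((4 * L + 2) * T)).
  { apply G.
    - intros u Hu. destruct (D u Hu) as [D1 D2]. apply dpl_plus.
      + apply (dpl_val _ _ (d1 u * p1 u + p1 u * d1 u)); [|ring]. 
        apply (dpl_ext (fun t => p1 t * p1 t)); [intros; ring|]. apply dpl_mult; auto.
      + apply (dpl_val _ _ (d2 u * p2 u + p2 u * d2 u)); [|ring]. 
        apply (dpl_ext (fun t => p2 t * p2 t)); [intros; ring|]. apply dpl_mult; auto.
    - intros u Hu. destruct (B u Hu) as [B1 B2].
      set (a := p1 u) in *. set (b := p2 u) in *. set (e1 := d1 u) in *. set (e2 := d2 u) in *.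
      assert (a * e1 <= Rabs a * Rabs e1) by (rewrite <- Rabs_mult; apply RRle_abs).
      assert (b * e2 <= Rabs b * Rabs e2) by (rewrite <- Rabs_mult; apply RRle_abs).
      assert (0 <= Rabs a) by apply Rabs_pos. assert (0 <= Rabs b) by apply Rabs_pos.
      assert (HA : Rabs a ^ 2 = a ^ 2) by (rewrite RPow_abs, Rabs_right; [auto| apply Rle_ge; nra]).
      assert (HB : Rabs b ^ 2 = b ^ 2) by (rewrite RPow_abs, Rabs_right; [auto| apply Rle_ge; nra]).
      assert (Rabs a * Rabs e1 <= Rabs a * (L * (Rabs a + Rabs b) + r)) by (apply Rmult_le_compat_l; auto).
      assert (Rabs b * Rabs e2 <= Rabs b * (L * (Rabs a + Rabs b) + r)) by (apply Rmult_le_compat_l; auto).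
      assert (0 <= L * (Rabs a - Rabs b)^2) by (apply Rmult_le_pos; [auto| apply pow2_ge_0]).
      assert (0 <= (r - (Rabs a + Rabs b))^2) by apply pow2_ge_0.
      assert (0 <= (Rabs a - Rabs b)^2) by apply pow2_ge_0.
      assert (2*a*e1 + 2*b*e2 <= 2*Rabs a*(L*(Rabs a+Rabs b)+r) + 2*Rabs b*(L*(Rabs a+Rabs b)+r)) by lra.
      assert (HF : 2*Rabs a*(L*(Rabs a+Rabs b)+r) + 2*Rabs b*(L*(Rabs a+Rabs b)+r) <= (4*L+2)*(Rabs a^2+Rabs b^2) + r^2) by nra.
      rewrite HA, HB in HF. simpl in HF. simpl. lra. }
  assert (exp ((4*L+2)*T) <= exp (4*L+2)).
  { destruct (Req_dec T 1). subst. rewrite Rmult_1_r; lra. left; apply exp_increasing; nra. }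
  assert (0 < exp ((4*L+2)*T)) by apply exp_pos.
  assert (0 <= p1 0 ^ 2 + p2 0 ^ 2) by nra.
  assert (r^2 * T <= r^2) by nra.
  apply (Rle_trans _ _ _ H1). apply Rmult_le_compat; nra. Qed.

Lemma sq_abs p c : 0 <= c -> p ^ 2 <= c ^ 2 -> Rabs p <= c.
Proof. intros. destruct (Rle_or_lt (Rabs p) c); auto.
  assert (Rabs p ^ 2 = p ^ 2) by (rewrite RPow_abs, Rabs_right; [auto| apply Rle_ge; nra]). nra. Qed.

Lemma inv_small d : 0 < d -> exists N : nat, forall n, (N <= n)%nat -> / (INR n + 1) < d.
Proof. intros. destruct (archimed_cor1 d H) as [N [HN1 HN2]]. exists N. intros n Hn.
  apply le_INR in Hn. assert (0 < INR N) by (apply lt_0_INR; auto).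
  apply Rle_lt_trans with (/ INR N); auto. apply Rinv_le_contravar; lra. Qed.

Lemma cauchy_lim (f : R -> R) :
  (forall eps, 0 < eps -> exists del, 0 < del /\ forall h h', h <> 0 -> h' <> 0 ->
      Rabs h < del -> Rabs h' < del -> Rabs (f h - f h') <= eps) ->
  exists l, forall eps, 0 < eps -> exists del, 0 < del /\ forall h, h <> 0 ->
      Rabs h < del -> Rabs (f h - l) <= eps.
Proof. intros C.
  set (u := fun n : nat => f (/ (INR n + 1))).
  assert (Hp : forall n, 0 < / (INR n + 1)) by (intros; apply Rinv_0_lt_compat; pose proof (pos_INR n); lra).
  assert (CC : Cauchy_crit u).
  { intros eps Heps. destruct (C (eps/2) ltac:(lra)) as [d [Hd Hf]].
    destruct (inv_small d Hd) as [N HN]. exists N. intros n m Hn Hm. unfold R_dist, u.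
    apply Rle_lt_trans with (eps/2); [|lra]. apply Hf.
    specialize (Hp n); lra. specialize (Hp m); lra.
    rewrite Rabs_right; [apply HN; lia| specialize (Hp n); lra].
    rewrite Rabs_right; [apply HN; lia| specialize (Hp m); lra]. }
  destruct (Rcomplete.R_complete u CC) as [l Hl]. exists l. intros eps Heps.
  destruct (C (eps/2) ltac:(lra)) as [d [Hd Hf]]. exists d. split; auto. intros h Hh Hhd.
  destruct (Hl (eps/2) ltac:(lra)) as [N1 HN1]. destruct (inv_small d Hd) as [N2 HN2].
  set (n := max N1 N2). specialize (HN1 n ltac:(lia)). unfold R_dist in HN1.
  assert (Rabs (f h - u n) <= eps/2).
  { unfold u. apply Hf; auto. specialize (Hp n); lra.
    rewrite Rabs_right; [apply HN2; lia| specialize (Hp n); lra]. }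
  replace (f h - l) with ((f h - u n) + (u n - l)) by ring.
  apply Rle_trans with (Rabs (f h - u n) + Rabs (u n - l)); [apply Rabs_triang| lra]. Qed.

Lemma uc_compact f a b : (forall y, continuity_pt f y) -> (forall y, y < a \/ b < y -> f y = 0) ->
  forall eps, 0 < eps -> exists del, 0 < del /\ forall u v, Rabs (u - v) < del -> Rabs (f u - f v) < eps.
Proof. intros Cf Z eps Heps.
  destruct (Heine f (fun c => a - 1 <= c <= b + 1) (compact_P3 _ _) (fun y _ => Cf y) (mkposreal eps Heps))
   as [d Hd]. exists (Rmin d 1). split. apply Rmin_pos; [apply cond_pos| lra].
  intros u v Huv. assert (Rabs (u - v) < d) by (apply Rlt_le_trans with (Rmin d 1); [auto| apply Rmin_l]).
  assert (Rabs (u - v) < 1) by (apply Rlt_le_trans with (Rmin d 1); [auto| apply Rmin_r]).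
  destruct (Rle_dec (a-1) u); destruct (Rle_dec u (b+1)); destruct (Rle_dec (a-1) v); destruct (Rle_dec v (b+1));
  try (apply (Hd u v); simpl; auto; fail);
  apply Rabs_def2 in H0; rewrite !Z by lra; rewrite Rminus_0_r, Rabs_R0; lra. Qed.

Lemma unif_taylor H H' : (forall y, derivable_pt_lim H y (H' y)) ->
  (forall eps, 0 < eps -> exists del, 0 < del /\ forall u v, Rabs (u - v) < del -> Rabs (H' u - H' v) < eps) ->
  forall eps, 0 < eps -> exists del, 0 < del /\ forall u v, Rabs (u - v) < del ->
    Rabs (H u - H v - H' v * (u - v)) <= eps * Rabs (u - v).
Proof. intros D U eps Heps. destruct (U eps Heps) as [d [Hd Hu]]. exists d; split; auto.
  intros u v Huv. destruct (Rtotal_order u v) as [Hlt|[Heq|Hgt]].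
  - destruct (MVT_cor2 H H' u v Hlt (fun c _ => D c)) as [c [E Hc]].
    replace (H u - H v - H' v * (u - v)) with (-(H v - H u) - H' v * (u - v)) by ring. rewrite E.
    replace (-(H' c * (v - u)) - H' v * (u - v)) with ((H' c - H' v) * (u - v)) by ring.
    rewrite Rabs_mult. apply Rmult_le_compat_r; [apply Rabs_pos|]. left; apply Hu.
    apply Rabs_def2 in Huv. apply Rabs_def1; lra.
  - subst. replace (H v - H v - H' v * (v - v)) with 0 by ring. rewrite Rabs_R0.
    apply Rmult_le_pos; [lra| apply Rabs_pos].
  - destruct (MVT_cor2 H H' v u Hgt (fun c _ => D c)) as [c [E Hc]].
    rewrite E. replace (H' c * (u - v) - H' v * (u - v)) with ((H' c - H' v) * (u - v)) by ring.
    rewrite Rabs_mult. apply Rmult_le_compat_r; [apply Rabs_pos|]. left; apply Hu.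
    apply Rabs_def2 in Huv. apply Rabs_def1; lra. Qed.

Lemma antider al : (forall u, continuity_pt al u) -> forall u,
  derivable_pt_lim (fun v => RInt al 0 v) u (al u).
Proof. intros C u. apply is_derive_Reals. apply (is_derive_RInt al (fun v => RInt al 0 v) 0 u).
  - apply filter_forall. intros b0. apply (@RInt_correct R_CompleteNormedModule). apply (@ex_RInt_continuous R_CompleteNormedModule).
    intros z _. apply continuity_pt_filterlim, C.
  - apply continuity_pt_filterlim, C. Qed.

Lemma intfac f al hh T : 0 <= T -> (forall u, continuity_pt al u) ->
  (forall u, 0 <= u <= T -> derivable_pt_lim f u (al u * f u + hh u)) ->
  (forall u, 0 <= u <= T -> 0 <= hh u) -> 0 <= f 0 ->
  0 <= f T /\ (0 < f 0 -> 0 < f T).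
Proof. intros HT C D Hh H0.
  set (A := fun v => RInt al 0 v).
  set (q := fun u => - (f u * exp (- A u))).
  set (q' := fun u => - ((al u * f u + hh u) * exp (- A u) + f u * (exp (- A u) * (- al u)))).
  assert (q T <= q 0).
  { apply (mvt_le q q'); auto.
    - intros u Hu. unfold q, q'. apply (dpl_val _ _ (-1 * ((al u * f u + hh u) * exp (- A u) + f u * (exp (- A u) * (- al u))))); [|ring].
      apply (dpl_ext (fun t => -1 * (f t * exp (- A t)))); [intros; ring|]. apply dpl_scal.
      apply (dpl_mult f (fun t => exp (- A t))); auto. apply (dpl_comp (fun t => - A t) exp).
      apply (dpl_val _ _ (-1 * al u)); [|ring]. apply (dpl_ext (fun t => -1 * A t)); [intros; ring|].
      apply dpl_scal. apply antider; auto. apply derivable_pt_lim_exp.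
    - intros u Hu. unfold q'. assert (0 < exp (- A u)) by apply exp_pos. specialize (Hh u Hu). nra. }
  unfold q, A in H. rewrite RInt_point in H. simpl in H. unfold zero in H; simpl in H.
  rewrite Ropp_0, exp_0 in H. assert (0 < exp (- RInt al 0 T)) by apply exp_pos.
  split. nra. intros. nra. Qed.


Lemma pderiv_aux_S l k x : peval (pderiv_aux (S k) l) x = peval (pderiv_aux k l) x + peval l x.
Proof. revert k. induction l as [|h t IH]; intros k. unfold peval; simpl; ring.
  unfold peval in *; cbn [pderiv_aux fold_right]. rewrite IH. rewrite S_INR. ring. Qed.

Lemma peval_deriv c x : derivable_pt_lim (peval c) x (peval (pderiv c) x).
Proof. induction c as [|h t IH]; simpl.
  - apply (derivable_pt_lim_const 0 x).
  - assert (E : peval (pderiv_aux 1 t) x = 0 + (1 * peval t x + x * peval (pderiv t) x)).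
    { destruct t as [|h' t']; simpl. ring. unfold peval; simpl. fold (peval t' x).
      fold (peval (pderiv_aux 2 t') x). fold (peval (pderiv_aux 1 t') x).
      rewrite (pderiv_aux_S t' 1 x). ring. }
    rewrite E. apply (dpl_plus (fun _ => h) (fun y => y * peval t y)).
    apply dpl_const. apply (dpl_mult (fun y => y) (peval t)). apply dpl_id. auto. Qed.

Lemma ext_in p a b y : a <= y <= b -> ext_zero p a b y = p y.
Proof. intros [H1 H2]. unfold ext_zero. destruct (Rle_dec a y); [|lra]. destruct (Rle_dec y b); [auto|lra]. Qed.
Lemma ext_out p a b y : y < a \/ b < y -> ext_zero p a b y = 0.
Proof. intros H. unfold ext_zero. destruct (Rle_dec a y); auto. destruct (Rle_dec y b); auto. lra. Qed.

Lemma ext_deriv p p' a b : a < b -> (forall y, derivable_pt_lim p y (p' y)) ->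
  p a = 0 -> p b = 0 -> p' a = 0 -> p' b = 0 ->
  forall y, derivable_pt_lim (ext_zero p a b) y (ext_zero p' a b y).
Proof. intros Hab D pa pb p'a p'b y eps Heps.
  destruct (Rlt_or_le y a) as [Hya|Hay].
  { exists (mkposreal (a - y) ltac:(lra)). simpl. intros h Hh Hhd. apply Rabs_def2 in Hhd.
    rewrite !ext_out by lra. replace ((0 - 0) / h - 0) with 0 by (field; auto). rewrite Rabs_R0; lra. }
  destruct (Rlt_or_le b y) as [Hby|Hyb].
  { exists (mkposreal (y - b) ltac:(lra)). simpl. intros h Hh Hhd. apply Rabs_def2 in Hhd.
    rewrite !ext_out by lra. replace ((0 - 0) / h - 0) with 0 by (field; auto). rewrite Rabs_R0; lra. }
  destruct (D y eps Heps) as [dp Hdp].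
  destruct (Req_dec y a) as [Ea|Na].
  { subst y. exists (mkposreal (Rmin dp (b - a)) ltac:(apply Rmin_pos; [apply cond_pos|lra])).
    simpl. intros h Hh Hhd. assert (Rabs h < dp) by (eapply Rlt_le_trans; [apply Hhd| apply Rmin_l]).
    assert (Rabs h < b - a) by (eapply Rlt_le_trans; [apply Hhd| apply Rmin_r]). apply Rabs_def2 in H0.
    rewrite (ext_in p' a b a) by lra. rewrite (ext_in p a b a) by lra.
    destruct (Rlt_or_le h 0).
    - rewrite ext_out by lra. rewrite pa, p'a. replace ((0 - 0) / h - 0) with 0 by (field; auto). rewrite Rabs_R0; lra.
    - rewrite ext_in by lra. apply Hdp; auto. }
  destruct (Req_dec y b) as [Eb|Nb].
  { subst y. exists (mkposreal (Rmin dp (b - a)) ltac:(apply Rmin_pos; [apply cond_pos|lra])).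
    simpl. intros h Hh Hhd. assert (Rabs h < dp) by (eapply Rlt_le_trans; [apply Hhd| apply Rmin_l]).
    assert (Rabs h < b - a) by (eapply Rlt_le_trans; [apply Hhd| apply Rmin_r]). apply Rabs_def2 in H0.
    rewrite (ext_in p' a b b) by lra. rewrite (ext_in p a b b) by lra.
    destruct (Rlt_or_le 0 h).
    - rewrite ext_out by lra. rewrite pb, p'b. replace ((0 - 0) / h - 0) with 0 by (field; auto). rewrite Rabs_R0; lra.
    - rewrite ext_in by lra. apply Hdp; auto. }
  exists (mkposreal (Rmin dp (Rmin (y - a) (b - y))) ltac:(apply Rmin_pos; [apply cond_pos|apply Rmin_pos; lra])).
  simpl. intros h Hh Hhd. assert (Rabs h < dp) by (eapply Rlt_le_trans; [apply Hhd| apply Rmin_l]).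
  assert (Rabs h < Rmin (y - a) (b - y)) by (eapply Rlt_le_trans; [apply Hhd| apply Rmin_r]).
  assert (Rabs h < y - a) by (eapply Rlt_le_trans; [apply H0| apply Rmin_l]).
  assert (Rabs h < b - y) by (eapply Rlt_le_trans; [apply H0| apply Rmin_r]).
  apply Rabs_def2 in H1. apply Rabs_def2 in H2.
  rewrite !ext_in by lra. apply Hdp; auto. Qed.


Lemma cpt_mult f g x : continuity_pt f x -> continuity_pt g x -> continuity_pt (fun t => f t * g t) x.
Proof. intros. exact (continuity_pt_mult f g x H H0). Qed.
Lemma cpt_plus f g x : continuity_pt f x -> continuity_pt g x -> continuity_pt (fun t => f t + g t) x.
Proof. intros. exact (continuity_pt_plus f g x H H0). Qed.
Lemma cpt_minus f g x : continuity_pt f x -> continuity_pt g x -> continuity_pt (fun t => f t - g t) x.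
Proof. intros. exact (continuity_pt_minus f g x H H0). Qed.
Lemma cpt_opp f x : continuity_pt f x -> continuity_pt (fun t => - f t) x.
Proof. intros. exact (continuity_pt_opp f x H). Qed.
Lemma cpt_comp f g x : continuity_pt f x -> continuity_pt g (f x) -> continuity_pt (fun t => g (f t)) x.
Proof. intros. exact (continuity_pt_comp f g x H H0). Qed.
Lemma cpt_const c x : continuity_pt (fun _ => c) x.
Proof. exact (continuity_pt_const (fun _ => c) x (fun _ _ => eq_refl)). Qed.
Lemma cpt_id x : continuity_pt (fun t => t) x.
Proof. exact (derivable_continuous_pt _ _ (derivable_pt_id x)). Qed.

Lemma lip_of_deriv f f' M : (forall y, derivable_pt_lim f y (f' y)) -> (forall y, Rabs (f' y) <= M) ->
  forall u v, Rabs (f u - f v) <= M * Rabs (u - v).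
Proof. intros D B u v. destruct (Rtotal_order u v) as [H|[H|H]].
  - destruct (MVT_cor2 f f' u v H (fun c _ => D c)) as [c [E _]].
    replace (f u - f v) with (- (f v - f u)) by ring. rewrite Rabs_Ropp, E, Rabs_mult.
    rewrite (Rabs_minus_sym u v). apply Rmult_le_compat_r; [apply Rabs_pos| auto].
  - subst. replace (f v - f v) with 0 by ring. replace (v - v) with 0 by ring. rewrite Rabs_R0. lra.
  - destruct (MVT_cor2 f f' v u H (fun c _ => D c)) as [c [E _]].
    rewrite E, Rabs_mult. apply Rmult_le_compat_r; [apply Rabs_pos| auto]. Qed.

Lemma time_bound (w w1 phi ph1 : R -> R) (X E : R -> R) s t0 :
  (forall y, derivable_pt_lim w y (w1 y)) -> (forall y, continuity_pt w1 y) ->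
  (forall y, derivable_pt_lim phi y (ph1 y)) -> (forall y, continuity_pt ph1 y) ->
  (forall t, derivable_pt_lim X t (- w1 (X t) * phi (X t) - (E t - w (X t)) * ph1 (X t))) ->
  (forall t, derivable_pt_lim E t (phi (X t))) ->
  E 0 = w (X 0) -> 0 < s -> phi (X 0) <> 0 ->
  (forall u, 0 <= u < t0 -> E u <> w (X u) + s * phi (X u)) ->
  t0 <= s.
Proof. intros Dw Cw1 Dphi Cph1 DX DE E0 Hs Hp0 Hfirst.
  destruct (Rle_or_lt t0 s) as [|Hlt]; auto. exfalso.
  assert (CX : forall u, continuity_pt X u) by (intros; eapply dpl_cont; apply DX).
  assert (CE : forall u, continuity_pt E u) by (intros; eapply dpl_cont; apply DE).
  assert (Cw : forall u, continuity_pt w u) by (intros; eapply dpl_cont; apply Dw).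
  assert (Cphi : forall u, continuity_pt phi u) by (intros; eapply dpl_cont; apply Dphi).
  assert (Hsig : exists sg, sg * sg = 1 /\ 0 < sg * phi (X 0)).
  { destruct (Rlt_or_le 0 (phi (X 0))). exists 1; split; lra. exists (-1); split. lra.
    assert (phi (X 0) < 0) by (destruct H; auto; contradiction). lra. }
  destruct Hsig as [sg [Hsg1 Hsg2]].
  set (g := fun u => sg * (E u - w (X u) - s * phi (X u))).
  assert (Cg : continuity g).
  { intros u. unfold g. apply cpt_mult. apply cpt_const. apply cpt_minus. apply cpt_minus; auto.
    apply cpt_comp; auto. apply cpt_mult. apply cpt_const. apply cpt_comp; auto. }
  assert (g0 : g 0 < 0).
  { unfold g. rewrite E0. assert (0 < s * (sg * phi (X 0))) by nra. nra. }
  assert (Gneg : forall u, 0 <= u <= s -> g u < 0).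
  { intros u Hu. destruct (Rlt_or_le (g u) 0) as [|Hge]; auto. exfalso.
    assert (g u <> 0).
    { intro Z. unfold g in Z. apply (Hfirst u); [lra|].
      assert (E u - w (X u) - s * phi (X u) = 0).
      { apply Rmult_eq_reg_l with sg. rewrite Z; ring. intro; subst; lra. } lra. }
    assert (0 < u) by (destruct (Req_dec u 0); [subst; lra| lra]).
    destruct (IVT g 0 u Cg H0 g0 ltac:(lra)) as [z [Hz Gz]].
    apply (Hfirst z); [lra|]. unfold g in Gz.
    assert (E z - w (X z) - s * phi (X z) = 0).
    { apply Rmult_eq_reg_l with sg. rewrite Gz; ring. intro; subst; lra. } lra. }
  set (m := fun u => sg * phi (X u)).
  set (al := fun u => - ph1 (X u) * (w1 (X u) + s * ph1 (X u))).
  assert (Cal : forall u, continuity_pt al u).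
  { intros u. unfold al. apply cpt_mult. apply cpt_opp, cpt_comp; auto.
    apply cpt_plus. apply cpt_comp; auto. apply cpt_mult. apply cpt_const. apply cpt_comp; auto. }
  assert (Mpos : forall u, 0 <= u <= s -> 0 <= m u).
  { intros u Hu. destruct (intfac m al (fun v => - g v * ph1 (X v) ^ 2) u ltac:(lra) Cal) as [H1 _]; auto.
    - intros v Hv. unfold m. apply (dpl_val _ _ (0 * phi (X v) + sg * (ph1 (X v) * (- w1 (X v) * phi (X v) - (E v - w (X v)) * ph1 (X v))))).
      apply (dpl_mult (fun _ => sg) (fun t => phi (X t))). apply dpl_const. apply (dpl_comp X phi); auto. unfold al, g. ring.
    - intros v Hv. assert (g v < 0) by (apply Gneg; lra). assert (0 <= ph1 (X v) ^ 2) by apply pow2_ge_0. nra.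
    - unfold m; lra. }
  set (ga := fun u => ph1 (X u) * (w1 (X u) + u * ph1 (X u))).
  assert (Cga : forall u, continuity_pt ga u).
  { intros u. unfold ga. apply cpt_mult. apply cpt_comp; auto.
    apply cpt_plus. apply cpt_comp; auto. apply cpt_mult. apply cpt_id. apply cpt_comp; auto. }
  set (k := fun u => sg * (E u - w (X u) - u * phi (X u))).
  destruct (intfac k ga (fun v => m v * (w1 (X v) + v * ph1 (X v)) ^ 2) s ltac:(lra) Cga) as [Hk _].
  - intros v Hv. unfold k.
    apply (dpl_val _ _ (0 * (E v - w (X v) - v * phi (X v)) + sg * (phi (X v) - w1 (X v) * (- w1 (X v) * phi (X v) - (E v - w (X v)) * ph1 (X v)) - (1 * phi (X v) + v * (ph1 (X v) * (- w1 (X v) * phi (X v) - (E v - w (X v)) * ph1 (X v))))))).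
    apply (dpl_mult (fun _ => sg) (fun t => E t - w (X t) - t * phi (X t))). apply dpl_const.
    apply (dpl_minus (fun t => E t - w (X t)) (fun t => t * phi (X t))).
    apply (dpl_minus E (fun t => w (X t))); auto. apply (dpl_comp X w); auto.
    apply (dpl_mult (fun t => t) (fun t => phi (X t))). apply dpl_id. apply (dpl_comp X phi); auto.
    unfold ga, m. ring.
  - intros v Hv. assert (0 <= m v) by (apply Mpos; lra). assert (0 <= (w1 (X v) + v * ph1 (X v)) ^ 2) by apply pow2_ge_0. nra.
  - unfold k. rewrite E0. lra.
  - assert (g s < 0) by (apply Gneg; lra). unfold g, k in *. lra. Qed.


Lemma abs_div_le a h r : h <> 0 -> Rabs a <= r * Rabs h -> Rabs (a / h) <= r.
Proof. intros Hh H. unfold Rdiv. rewrite Rabs_mult, Rabs_inv.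
  assert (0 < Rabs h) by (apply Rabs_pos_lt; auto).
  apply Rmult_le_reg_r with (Rabs h); auto. rewrite Rmult_assoc, Rinv_l by lra. lra. Qed.

Lemma dpl_divc f u a h : derivable_pt_lim f u a -> derivable_pt_lim (fun v => f v / h) u (a / h).
Proof. intros. apply (dpl_val _ _ (a * (fun _ => /h) u + f u * 0)).
  apply (dpl_mult f (fun _ => / h)); auto. apply dpl_const. unfold Rdiv; simpl; ring. Qed.

Lemma lin_bound a p b q c : Rabs (a * p + b * q + c) <= Rabs a * Rabs p + Rabs b * Rabs q + Rabs c.
Proof. rewrite <- !Rabs_mult. eapply Rle_trans; [apply Rabs_triang|].
  apply Rplus_le_compat_r. apply Rabs_triang. Qed.

Lemma abs3 a b c : Rabs (a - b - c) <= Rabs a + Rabs b + Rabs c.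
Proof. unfold Rminus. eapply Rle_trans; [apply Rabs_triang|]. rewrite Rabs_Ropp.
  apply Rplus_le_compat_r. eapply Rle_trans; [apply Rabs_triang|]. rewrite Rabs_Ropp. lra. Qed.

Lemma mul_le_abs a b A B : Rabs a <= A -> Rabs b <= B -> Rabs (a * b) <= A * B.
Proof. intros. rewrite Rabs_mult. apply Rmult_le_compat; auto; apply Rabs_pos. Qed.

Definition UCf (f : R -> R) := forall eps, 0 < eps -> exists del, 0 < del /\
  forall u v, Rabs (u - v) < del -> Rabs (f u - f v) < eps.

Lemma sq_le_of_abs a c : Rabs a <= c -> a ^ 2 <= c ^ 2.
Proof. intros H. assert (0 <= Rabs a) by apply Rabs_pos.
  assert (a ^ 2 = Rabs a ^ 2) by (rewrite RPow_abs, Rabs_right; [auto| apply Rle_ge, pow2_ge_0]).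
  rewrite H1. apply pow_incr. lra. Qed.

Lemma lt_min z p q : z < Rmin p q -> z < p /\ z < q.
Proof. intros. split; eapply Rlt_le_trans; eauto; [apply Rmin_l| apply Rmin_r]. Qed.

Lemma lt_div_K a d K : 0 < K -> 0 <= a -> a < d / K -> K * a < d.
Proof. intros. apply Rmult_lt_compat_l with (r := K) in H1; auto.
  replace (K * (d / K)) with d in H1 by (field; lra). auto. Qed.


Lemma main_deriv (w w1 G G' phi ph1 ph2 : R -> R) (xi eta : R -> R -> R) (x T Nw Nphi : R) :
  (forall y, derivable_pt_lim w y (w1 y)) ->
  (forall y, derivable_pt_lim G y (G' y)) -> (forall y, derivable_pt_lim phi y (ph1 y)) ->
  (forall y, derivable_pt_lim ph1 y (ph2 y)) ->
  UCf G' -> UCf ph2 -> UCf ph1 ->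
  (forall y, Rabs (G' y) <= 2 * Nw * Nphi) -> (forall y, Rabs (phi y) <= Nphi) ->
  (forall y, Rabs (ph1 y) <= Nphi) -> (forall y, Rabs (ph2 y) <= Nphi) ->
  0 <= Nphi -> Nphi < 1 -> 0 <= Nw -> Rabs (w x) <= Nw -> Rabs (w1 x) <= Nw ->
  (forall y u, derivable_pt_lim (fun v => xi v y) u (G (xi u y) - eta u y * ph1 (xi u y))) ->
  (forall y u, derivable_pt_lim (fun v => eta v y) u (phi (xi u y))) ->
  (forall y, xi 0 y = y /\ eta 0 y = w y) ->
  0 <= T <= 1 ->
  exists dxi deta, derivable_pt_lim (fun y => xi T y) x dxi /\
    derivable_pt_lim (fun y => eta T y) x deta /\
    Rabs (dxi - 1) <= (4 * Nw + 3) * Nphi * exp (6 * Nw + 5) /\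
    Rabs (deta - w1 x) <= (4 * Nw + 3) * Nphi * exp (6 * Nw + 5).
Proof.
  intros Dw DG Dphi Dph1 UG' Uph2 Uph1 BG' Bphi Bph1 Bph2 HN0 HN1 HW0 Bwx Bw1x DX DE I0 HT.
  set (L := 3 * Nw + 2).
  set (e1 := exp (2 * L + 1)).
  assert (He1 : 0 < e1) by apply exp_pos.
  assert (He1sq : exp (4 * L + 2) = e1 * e1) by (unfold e1; rewrite <- exp_plus; f_equal; ring).
  set (K := (Nw + 2) * e1).
  assert (HK : 0 < K) by (unfold K; apply Rmult_lt_0_compat; lra).
  assert (B0 : forall u, 0 <= u <= T -> Rabs (eta u x) <= Nw + 1).
  { intros u Hu. assert (Hb : forall y, Rabs (phi (xi y x)) <= 1) by (intros y; specialize (Bphi (xi y x)); lra).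
    assert (Hl := lip_of_deriv (fun v => eta v x) (fun v => phi (xi v x)) 1 (DE x) Hb u 0).
    simpl in Hl. destruct (I0 x) as [_ E0]. rewrite E0 in Hl. rewrite Rminus_0_r in Hl.
    rewrite (Rabs_right u) in Hl by lra.
    replace (eta u x) with ((eta u x - w x) + w x) by ring.
    eapply Rle_trans; [apply Rabs_triang|]. lra. }
  assert (LG := lip_of_deriv G G' (2 * Nw * Nphi) DG BG').
  assert (Lph1 := lip_of_deriv ph1 ph2 Nphi Dph1 Bph2).
  assert (Lphi := lip_of_deriv phi ph1 Nphi Dphi Bph1).
  assert (Lip1 : forall u a e, 0 <= u <= T ->
     Rabs ((G a - e * ph1 a) - (G (xi u x) - eta u x * ph1 (xi u x))) <=
     L * (Rabs (a - xi u x) + Rabs (e - eta u x))).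
  { intros u a e Hu.
    replace ((G a - e * ph1 a) - (G (xi u x) - eta u x * ph1 (xi u x))) with
      ((G a - G (xi u x)) - (e - eta u x) * ph1 a - eta u x * (ph1 a - ph1 (xi u x))) by ring.
    eapply Rle_trans; [apply abs3|].
    assert (H1 := LG a (xi u x)).
    assert (H2 : Rabs ((e - eta u x) * ph1 a) <= Rabs (e - eta u x) * Nphi)
      by (apply mul_le_abs; [lra| apply Bph1]).
    assert (Q3 : Rabs (eta u x * (ph1 a - ph1 (xi u x))) <= (Nw + 1) * (Nphi * Rabs (a - xi u x)))
      by (apply mul_le_abs; [apply B0; auto| apply Lph1]).
    assert (0 <= Rabs (a - xi u x)) by apply Rabs_pos. assert (0 <= Rabs (e - eta u x)) by apply Rabs_pos.
    assert (0 <= Nw * Rabs (a - xi u x)) by (apply Rmult_le_pos; lra).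
    assert (2 * Nw * Nphi * Rabs (a - xi u x) <= 2 * Nw * Rabs (a - xi u x)) by nra.
    assert (Rabs (e - eta u x) * Nphi <= Rabs (e - eta u x)) by nra.
    assert ((Nw + 1) * (Nphi * Rabs (a - xi u x)) <= (Nw + 1) * Rabs (a - xi u x)) by nra.
    assert (0 <= Nw * Rabs (e - eta u x)) by (apply Rmult_le_pos; lra). unfold L. nra. }
  assert (Lip2 : forall u a, Rabs (phi a - phi (xi u x)) <= L * Rabs (a - xi u x)).
  { intros u a. eapply Rle_trans; [apply Lphi|]. apply Rmult_le_compat_r; [apply Rabs_pos| unfold L; lra]. }
  destruct (Dw x 1 ltac:(lra)) as [dw Hdw].
  assert (Wx : forall h, h <> 0 -> Rabs h < dw -> Rabs (w (x + h) - w x) <= (Nw + 1) * Rabs h).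
  { intros h Hh Hhd. specialize (Hdw h Hh Hhd).
    replace (w (x + h) - w x) with ((w (x + h) - w x) / h * h) by (field; auto).
    rewrite Rabs_mult. apply Rmult_le_compat_r; [apply Rabs_pos|].
    replace ((w (x + h) - w x) / h) with (((w (x + h) - w x) / h - w1 x) + w1 x) by ring.
    eapply Rle_trans; [apply Rabs_triang|]. lra. }
  assert (A : forall h, h <> 0 -> Rabs h < dw -> forall u, 0 <= u <= T ->
     Rabs (xi u (x + h) - xi u x) <= K * Rabs h /\ Rabs (eta u (x + h) - eta u x) <= K * Rabs h).
  { intros h Hh Hhd u Hu.
    assert (LE := linest (fun v => xi v (x + h) - xi v x) (fun v => eta v (x + h) - eta v x)
       (fun v => (G (xi v (x + h)) - eta v (x + h) * ph1 (xi v (x + h))) - (G (xi v x) - eta v x * ph1 (xi v x)))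
       (fun v => phi (xi v (x + h)) - phi (xi v x)) L 0 u ltac:(unfold L; lra) ltac:(lra) ltac:(lra)).
    cbv beta in LE.
    assert (LE2 : (xi u (x + h) - xi u x) ^ 2 + (eta u (x + h) - eta u x) ^ 2 <= (K * Rabs h) ^ 2).
    { eapply Rle_trans; [apply LE|].
      - intros v Hv. split; apply dpl_minus; auto.
      - intros v Hv. split.
        + rewrite Rplus_0_r. apply Lip1. lra.
        + rewrite Rplus_0_r. eapply Rle_trans; [apply Lip2|].
          assert (0 <= Rabs (eta v (x + h) - eta v x)) by apply Rabs_pos. unfold L in *. nra.
      - destruct (I0 (x + h)) as [X1 E1]. destruct (I0 x) as [X2 E2]. rewrite X1, X2, E1, E2.
        replace (x + h - x) with h by ring. rewrite He1sq.
        specialize (Wx h Hh Hhd).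
        assert (Hw2 : (w (x + h) - w x) ^ 2 <= ((Nw + 1) * Rabs h) ^ 2) by (apply sq_le_of_abs; auto).
        assert (Hh2 : h ^ 2 = Rabs h ^ 2) by (rewrite RPow_abs, Rabs_right; [auto| apply Rle_ge, pow2_ge_0]).
        unfold K. rewrite Hh2.
        assert (0 <= Rabs h ^ 2) by apply pow2_ge_0.
        assert (0 <= e1 * e1) by nra.
        assert ((Rabs h ^ 2 + (w (x + h) - w x) ^ 2 + 0 ^ 2) <= (Nw + 2) ^ 2 * Rabs h ^ 2) by nra.
        replace (((Nw + 2) * e1 * Rabs h) ^ 2) with ((Nw + 2) ^ 2 * Rabs h ^ 2 * (e1 * e1)) by ring.
        apply Rmult_le_compat_r; auto. }
    assert (0 <= K * Rabs h) by (apply Rmult_le_pos; [lra| apply Rabs_pos]).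
    split; apply sq_abs; auto.
    assert (0 <= (eta u (x + h) - eta u x) ^ 2) by apply pow2_ge_0. lra.
    assert (0 <= (xi u (x + h) - xi u x) ^ 2) by apply pow2_ge_0. lra. }
  pose (R1 := fun h u => (G (xi u (x + h)) - eta u (x + h) * ph1 (xi u (x + h))) - (G (xi u x) - eta u x * ph1 (xi u x))
     - (G' (xi u x) - eta u x * ph2 (xi u x)) * (xi u (x + h) - xi u x) - (- ph1 (xi u x)) * (eta u (x + h) - eta u x)).
  pose (R2 := fun h u => phi (xi u (x + h)) - phi (xi u x) - ph1 (xi u x) * (xi u (x + h) - xi u x)).
  assert (Rsm : forall eps, 0 < eps -> exists del, 0 < del /\ del <= dw /\ forall h, h <> 0 -> Rabs h < del ->
     forall u, 0 <= u <= T -> Rabs (R1 h u) <= eps * Rabs h /\ Rabs (R2 h u) <= eps * Rabs h).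
  { intros eps Heps. set (e' := eps / (2 * (Nw + 2) * K)).
    assert (He' : 0 < e') by (unfold e'; apply Rdiv_lt_0_compat; [lra| apply Rmult_lt_0_compat; lra]).
    destruct (unif_taylor G G' DG UG' e' He') as [dG [HdG TG]].
    destruct (unif_taylor ph1 ph2 Dph1 Uph2 e' He') as [d1 [Hd1 T1]].
    destruct (unif_taylor phi ph1 Dphi Uph1 e' He') as [dp [Hdp Tp]].
    assert (0 < eps / (2 * K * K)) by (apply Rdiv_lt_0_compat; [lra| apply Rmult_lt_0_compat; [|lra]; lra]).
    exists (Rmin dw (Rmin (dG / K) (Rmin (d1 / K) (Rmin (dp / K) (eps / (2 * K * K)))))).
    assert (0 < dG / K) by (apply Rdiv_lt_0_compat; lra).
    assert (0 < d1 / K) by (apply Rdiv_lt_0_compat; lra).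
    assert (0 < dp / K) by (apply Rdiv_lt_0_compat; lra).
    assert (0 < dw) by apply cond_pos.
    split. repeat apply Rmin_pos; auto.
    split. apply Rmin_l.
    intros h Hh Hhd u Hu.
    apply lt_min in Hhd as [Hh1 Hhd]. apply lt_min in Hhd as [Hh2 Hhd].
    apply lt_min in Hhd as [Hh3 Hhd]. apply lt_min in Hhd as [Hh4 Hh5].
    assert (Ha : 0 <= Rabs h) by apply Rabs_pos.
    destruct (A h Hh Hh1 u Hu) as [AX AE].
    set (DX0 := xi u (x + h) - xi u x) in *. set (DE0 := eta u (x + h) - eta u x) in *.
    assert (KG : Rabs (xi u (x + h) - xi u x) < dG) by (eapply Rle_lt_trans; [apply AX| apply lt_div_K; auto]).
    assert (K1 : Rabs (xi u (x + h) - xi u x) < d1) by (eapply Rle_lt_trans; [apply AX| apply lt_div_K; auto]).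
    assert (Kp : Rabs (xi u (x + h) - xi u x) < dp) by (eapply Rle_lt_trans; [apply AX| apply lt_div_K; auto]).
    assert (K2 : K * K * Rabs h <= eps / 2).
    { left. replace (eps / 2) with ((2 * K * K) * (eps / (2 * K * K)) / 2) by (field; lra).
      assert (0 < 2 * K * K) by nra. nra. }
    assert (Hee : (Nw + 2) * e' * K = eps / 2) by (unfold e'; field; lra).
    assert (HD : 0 <= Rabs DX0) by apply Rabs_pos.
    split.
    - unfold R1. fold DX0 DE0.
      replace ((G (xi u (x + h)) - eta u (x + h) * ph1 (xi u (x + h))) - (G (xi u x) - eta u x * ph1 (xi u x))
     - (G' (xi u x) - eta u x * ph2 (xi u x)) * DX0 - (- ph1 (xi u x)) * DE0) with
        ((G (xi u (x + h)) - G (xi u x) - G' (xi u x) * DX0) - DE0 * (ph1 (xi u (x + h)) - ph1 (xi u x))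
         - eta u x * (ph1 (xi u (x + h)) - ph1 (xi u x) - ph2 (xi u x) * DX0)) by (unfold DX0, DE0; ring).
      eapply Rle_trans; [apply abs3|].
      assert (Q1 := TG _ _ KG). fold DX0 in Q1.
      assert (Q2 : Rabs (DE0 * (ph1 (xi u (x + h)) - ph1 (xi u x))) <= (K * Rabs h) * (K * Rabs h)).
      { apply mul_le_abs; auto. eapply Rle_trans; [apply Lph1|]. fold DX0.
        assert (Nphi * Rabs DX0 <= Rabs DX0) by nra. lra. }
      assert (Q3 : Rabs (eta u x * (ph1 (xi u (x + h)) - ph1 (xi u x) - ph2 (xi u x) * DX0)) <= (Nw + 1) * (e' * Rabs DX0)).
      { apply mul_le_abs; auto. }
      assert (e' * Rabs DX0 <= e' * (K * Rabs h)) by (apply Rmult_le_compat_l; lra).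
      assert ((Nw + 1) * (e' * Rabs DX0) <= (Nw + 1) * (e' * (K * Rabs h))) by (apply Rmult_le_compat_l; lra).
      assert (K * Rabs h * (K * Rabs h) <= eps / 2 * Rabs h) by nra.
      assert ((Nw + 2) * e' * K * Rabs h = eps / 2 * Rabs h) by (rewrite Hee; auto).
      nra.
    - unfold R2. fold DX0. specialize (Tp _ _ Kp). fold DX0 in Tp.
      eapply Rle_trans; [apply Tp|].
      assert (e' * Rabs DX0 <= e' * (K * Rabs h)) by (apply Rmult_le_compat_l; lra).
      assert ((Nw + 2) * (e' * K * Rabs h) = eps / 2 * Rabs h) by (rewrite <- Hee; ring).
      assert (0 <= e' * K * Rabs h) by (apply Rmult_le_pos; [apply Rmult_le_pos|]; lra).
      nra. }
  assert (BA11 : forall u, 0 <= u <= T -> Rabs (G' (xi u x) - eta u x * ph2 (xi u x)) <= (3 * Nw + 1) * Nphi).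
  { intros u Hu. unfold Rminus. eapply Rle_trans; [apply Rabs_triang|]. rewrite Rabs_Ropp.
    assert (Rabs (eta u x * ph2 (xi u x)) <= (Nw + 1) * Nphi) by (apply mul_le_abs; auto).
    specialize (BG' (xi u x)). lra. }
  assert (BA11L : forall u, 0 <= u <= T -> Rabs (G' (xi u x) - eta u x * ph2 (xi u x)) <= L).
  { intros u Hu. eapply Rle_trans; [apply BA11; auto|]. unfold L. nra. }
  assert (BA12L : forall u, Rabs (- ph1 (xi u x)) <= L).
  { intros u. rewrite Rabs_Ropp. specialize (Bph1 (xi u x)). unfold L; lra. }
  assert (DQX : forall h u, derivable_pt_lim (fun v => (xi v (x + h) - xi v x) / h) u
      (((G (xi u (x + h)) - eta u (x + h) * ph1 (xi u (x + h))) - (G (xi u x) - eta u x * ph1 (xi u x))) / h)).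
  { intros h u. apply (dpl_divc (fun v => xi v (x + h) - xi v x)). apply dpl_minus; auto. }
  assert (DQE : forall h u, derivable_pt_lim (fun v => (eta v (x + h) - eta v x) / h) u
      ((phi (xi u (x + h)) - phi (xi u x)) / h)).
  { intros h u. apply (dpl_divc (fun v => eta v (x + h) - eta v x)). apply dpl_minus; auto. }
  assert (IdX : forall h u, h <> 0 -> ((G (xi u (x + h)) - eta u (x + h) * ph1 (xi u (x + h))) - (G (xi u x) - eta u x * ph1 (xi u x))) / h
     = (G' (xi u x) - eta u x * ph2 (xi u x)) * ((xi u (x + h) - xi u x) / h) + (- ph1 (xi u x)) * ((eta u (x + h) - eta u x) / h) + R1 h u / h).
  { intros h u Hh. unfold R1. field. auto. }
  assert (IdE : forall h u, h <> 0 -> (phi (xi u (x + h)) - phi (xi u x)) / h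
     = ph1 (xi u x) * ((xi u (x + h) - xi u x) / h) + R2 h u / h).
  { intros h u Hh. unfold R2. field. auto. }
  assert (Cq : forall eps, 0 < eps -> exists del, 0 < del /\ forall h h', h <> 0 -> h' <> 0 -> Rabs h < del -> Rabs h' < del ->
     Rabs ((xi T (x + h) - xi T x) / h - (xi T (x + h') - xi T x) / h') <= eps /\ Rabs ((eta T (x + h) - eta T x) / h - (eta T (x + h') - eta T x) / h') <= eps).
  { intros eps Heps. set (rho := eps / (4 * e1)).
    assert (Hrho : 0 < rho) by (unfold rho; apply Rdiv_lt_0_compat; lra).
    destruct (Rsm rho Hrho) as [dR [HdR [_ HR]]].
    destruct (Dw x rho Hrho) as [dw2 Hdw2].
    assert (0 < dw2) by apply cond_pos.
    exists (Rmin dR dw2). split. apply Rmin_pos; auto.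
    intros h h' Hh Hh' Hhd Hhd'. apply lt_min in Hhd as [Hhd1 Hhd2]. apply lt_min in Hhd' as [Hhd1' Hhd2'].
    assert (LE := linest (fun v => (xi v (x + h) - xi v x) / h - (xi v (x + h') - xi v x) / h')
       (fun v => (eta v (x + h) - eta v x) / h - (eta v (x + h') - eta v x) / h')
       (fun v => ((G (xi v (x + h)) - eta v (x + h) * ph1 (xi v (x + h))) - (G (xi v x) - eta v x * ph1 (xi v x))) / h
              - ((G (xi v (x + h')) - eta v (x + h') * ph1 (xi v (x + h'))) - (G (xi v x) - eta v x * ph1 (xi v x))) / h')
       (fun v => (phi (xi v (x + h)) - phi (xi v x)) / h - (phi (xi v (x + h')) - phi (xi v x)) / h')
       L (2 * rho) T ltac:(unfold L; lra) ltac:(lra) HT).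
    cbv beta in LE.
    assert (LE2 : ((xi T (x + h) - xi T x) / h - (xi T (x + h') - xi T x) / h') ^ 2 +
                  ((eta T (x + h) - eta T x) / h - (eta T (x + h') - eta T x) / h') ^ 2 <= eps ^ 2).
    { eapply Rle_trans; [apply LE|].
      - intros v Hv. split; apply dpl_minus; auto.
      - intros v Hv. rewrite (IdX h v Hh), (IdX h' v Hh'), (IdE h v Hh), (IdE h' v Hh').
        assert (Q1 : Rabs (R1 h v / h) <= rho) by (apply abs_div_le; auto; apply HR; auto).
        assert (Q2 : Rabs (R1 h' v / h') <= rho) by (apply abs_div_le; auto; apply HR; auto).
        assert (Q3 : Rabs (R2 h v / h) <= rho) by (apply abs_div_le; auto; apply HR; auto).
        assert (Q4 : Rabs (R2 h' v / h') <= rho) by (apply abs_div_le; auto; apply HR; auto).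
        set (a11 := G' (xi v x) - eta v x * ph2 (xi v x)) in *.
        set (a12 := - ph1 (xi v x)) in *.
        set (P1 := (xi v (x + h) - xi v x) / h - (xi v (x + h') - xi v x) / h').
        set (P2 := (eta v (x + h) - eta v x) / h - (eta v (x + h') - eta v x) / h').
        assert (Hab1 := BA11L v Hv). assert (Hab2 := BA12L v). fold a11 in Hab1. fold a12 in Hab2.
        assert (HP1 : 0 <= Rabs P1) by apply Rabs_pos. assert (HP2 : 0 <= Rabs P2) by apply Rabs_pos.
        split.
        + replace (a11 * ((xi v (x + h) - xi v x) / h) + a12 * ((eta v (x + h) - eta v x) / h) + R1 h v / h -
             (a11 * ((xi v (x + h') - xi v x) / h') + a12 * ((eta v (x + h') - eta v x) / h') + R1 h' v / h'))
            with (a11 * P1 + a12 * P2 + (R1 h v / h - R1 h' v / h')) by (unfold P1, P2; ring).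
          eapply Rle_trans; [apply lin_bound|].
          assert (Rabs (R1 h v / h - R1 h' v / h') <= 2 * rho)
            by (unfold Rminus; eapply Rle_trans; [apply Rabs_triang|]; rewrite Rabs_Ropp; lra).
          assert (Rabs a11 * Rabs P1 <= L * Rabs P1) by (apply Rmult_le_compat_r; auto).
          assert (Rabs a12 * Rabs P2 <= L * Rabs P2) by (apply Rmult_le_compat_r; auto).
          lra.
        + replace (ph1 (xi v x) * ((xi v (x + h) - xi v x) / h) + R2 h v / h -
             (ph1 (xi v x) * ((xi v (x + h') - xi v x) / h') + R2 h' v / h'))
            with (ph1 (xi v x) * P1 + 0 * P2 + (R2 h v / h - R2 h' v / h')) by (unfold P1, P2; ring).
          eapply Rle_trans; [apply lin_bound|]. rewrite Rabs_R0.
          assert (Rabs (R2 h v / h - R2 h' v / h') <= 2 * rho)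
            by (unfold Rminus; eapply Rle_trans; [apply Rabs_triang|]; rewrite Rabs_Ropp; lra).
          assert (Rabs (ph1 (xi v x)) <= L) by (specialize (Bph1 (xi v x)); unfold L; lra).
          assert (Rabs (ph1 (xi v x)) * Rabs P1 <= L * Rabs P1) by (apply Rmult_le_compat_r; auto).
          assert (0 <= L * Rabs P2) by (apply Rmult_le_pos; [unfold L; lra| auto]).
          lra.
      - destruct (I0 (x + h)) as [X1 E1]. destruct (I0 (x + h')) as [X1' E1']. destruct (I0 x) as [X2 E2].
        rewrite X1, X2, E1, E2, X1', E1'.
        replace ((x + h - x) / h - (x + h' - x) / h') with 0 by (field; auto).
        assert (W1 := Hdw2 h Hh Hhd2). assert (W2 := Hdw2 h' Hh' Hhd2').
        assert (W3 : Rabs ((w (x + h) - w x) / h - (w (x + h') - w x) / h') <= 2 * rho).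
        { replace ((w (x + h) - w x) / h - (w (x + h') - w x) / h') with
            (((w (x + h) - w x) / h - w1 x) - ((w (x + h') - w x) / h' - w1 x)) by ring.
          unfold Rminus at 1. eapply Rle_trans; [apply Rabs_triang|]. rewrite Rabs_Ropp. lra. }
        apply sq_le_of_abs in W3. rewrite He1sq.
        assert (Hre : rho * e1 = eps / 4) by (unfold rho; field; lra).
        assert (0 <= e1 * e1) by nra.
        assert ((0 ^ 2 + ((w (x + h) - w x) / h - (w (x + h') - w x) / h') ^ 2 + (2 * rho) ^ 2) <= 8 * rho ^ 2) by (simpl in *; nra).
        apply Rle_trans with (8 * rho ^ 2 * (e1 * e1)). apply Rmult_le_compat_r; auto.
        replace (8 * rho ^ 2 * (e1 * e1)) with (8 * (rho * e1) ^ 2) by ring. rewrite Hre. nra. }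
    split; apply (sq_abs _ eps); try lra.
    assert (0 <= ((eta T (x + h) - eta T x) / h - (eta T (x + h') - eta T x) / h') ^ 2) by apply pow2_ge_0. lra.
    assert (0 <= ((xi T (x + h) - xi T x) / h - (xi T (x + h') - xi T x) / h') ^ 2) by apply pow2_ge_0. lra. }
  set (c0 := (4 * Nw + 3) * Nphi).
  assert (Hc0 : 0 <= c0) by (unfold c0; apply Rmult_le_pos; lra).
  assert (Dq : forall rho, 0 < rho -> exists del, 0 < del /\ forall h, h <> 0 -> Rabs h < del ->
     Rabs ((xi T (x + h) - xi T x) / h - 1) <= (c0 + rho) * e1 /\
     Rabs ((eta T (x + h) - eta T x) / h - (w (x + h) - w x) / h) <= (c0 + rho) * e1 /\
     Rabs ((w (x + h) - w x) / h - w1 x) <= rho).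
  { intros rho Hrho.
    destruct (Rsm rho Hrho) as [dR [HdR [_ HR]]].
    destruct (Dw x (Rmin rho 1) ltac:(apply Rmin_pos; lra)) as [dw3 Hdw3].
    assert (0 < dw3) by apply cond_pos.
    exists (Rmin dR dw3). split. apply Rmin_pos; auto.
    intros h Hh Hhd. apply lt_min in Hhd as [Hhd1 Hhd2].
    set (Dqh := (w (x + h) - w x) / h).
    assert (W1 := Hdw3 h Hh Hhd2). fold Dqh in W1.
    assert (W2 : Rabs (Dqh - w1 x) <= rho) by (assert (Rmin rho 1 <= rho) by apply Rmin_l; lra).
    assert (W3 : Rabs Dqh <= Nw + 1).
    { assert (Rmin rho 1 <= 1) by apply Rmin_r.
      replace Dqh with ((Dqh - w1 x) + w1 x) by ring. eapply Rle_trans; [apply Rabs_triang|]. lra. }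
    assert (LE := linest (fun v => (xi v (x + h) - xi v x) / h - 1)
       (fun v => (eta v (x + h) - eta v x) / h - Dqh)
       (fun v => ((G (xi v (x + h)) - eta v (x + h) * ph1 (xi v (x + h))) - (G (xi v x) - eta v x * ph1 (xi v x))) / h)
       (fun v => (phi (xi v (x + h)) - phi (xi v x)) / h)
       L (c0 + rho) T ltac:(unfold L; lra) ltac:(lra) HT).
    cbv beta in LE.
    assert (LE2 : ((xi T (x + h) - xi T x) / h - 1) ^ 2 + ((eta T (x + h) - eta T x) / h - Dqh) ^ 2 <= ((c0 + rho) * e1) ^ 2).
    { eapply Rle_trans; [apply LE|].
      - intros v Hv. split.
        + apply (dpl_val _ _ (((G (xi v (x + h)) - eta v (x + h) * ph1 (xi v (x + h))) - (G (xi v x) - eta v x * ph1 (xi v x))) / h - 0)); [|ring].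
          apply dpl_minus; auto. apply dpl_const.
        + apply (dpl_val _ _ ((phi (xi v (x + h)) - phi (xi v x)) / h - 0)); [|ring].
          apply dpl_minus; auto. apply dpl_const.
      - intros v Hv. rewrite (IdX h v Hh), (IdE h v Hh).
        assert (Q1 : Rabs (R1 h v / h) <= rho) by (apply abs_div_le; auto; apply HR; auto).
        assert (Q3 : Rabs (R2 h v / h) <= rho) by (apply abs_div_le; auto; apply HR; auto).
        set (a11 := G' (xi v x) - eta v x * ph2 (xi v x)) in *.
        set (a12 := - ph1 (xi v x)) in *.
        set (P1 := (xi v (x + h) - xi v x) / h - 1).
        set (P2 := (eta v (x + h) - eta v x) / h - Dqh).
        assert (Hab1 := BA11L v Hv). assert (Hab2 := BA12L v). fold a11 in Hab1. fold a12 in Hab2.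
        assert (Hab1' := BA11 v Hv). fold a11 in Hab1'.
        assert (HP1 : 0 <= Rabs P1) by apply Rabs_pos. assert (HP2 : 0 <= Rabs P2) by apply Rabs_pos.
        assert (Hph : Rabs (ph1 (xi v x)) <= Nphi) by apply Bph1.
        split.
        + replace (a11 * ((xi v (x + h) - xi v x) / h) + a12 * ((eta v (x + h) - eta v x) / h) + R1 h v / h)
            with (a11 * P1 + a12 * P2 + (a11 + a12 * Dqh + R1 h v / h)) by (unfold P1, P2; ring).
          eapply Rle_trans; [apply lin_bound|].
          assert (Rabs (a12 * Dqh) <= Nphi * (Nw + 1)) by (apply mul_le_abs; auto; unfold a12; rewrite Rabs_Ropp; auto).
          assert (Rabs (a11 + a12 * Dqh + R1 h v / h) <= c0 + rho).
          { eapply Rle_trans; [apply Rabs_triang|]. eapply Rle_trans; [apply Rplus_le_compat_r; apply Rabs_triang|].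
            unfold c0. nra. }
          assert (Rabs a11 * Rabs P1 <= L * Rabs P1) by (apply Rmult_le_compat_r; auto).
          assert (Rabs a12 * Rabs P2 <= L * Rabs P2) by (apply Rmult_le_compat_r; auto).
          lra.
        + replace (ph1 (xi v x) * ((xi v (x + h) - xi v x) / h) + R2 h v / h)
            with (ph1 (xi v x) * P1 + 0 * P2 + (ph1 (xi v x) + R2 h v / h)) by (unfold P1, P2; ring).
          eapply Rle_trans; [apply lin_bound|]. rewrite Rabs_R0.
          assert (Rabs (ph1 (xi v x) + R2 h v / h) <= c0 + rho).
          { eapply Rle_trans; [apply Rabs_triang|]. unfold c0. nra. }
          assert (Rabs (ph1 (xi v x)) <= L) by (unfold L; lra).
          assert (Rabs (ph1 (xi v x)) * Rabs P1 <= L * Rabs P1) by (apply Rmult_le_compat_r; auto).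
          assert (0 <= L * Rabs P2) by (apply Rmult_le_pos; [unfold L; lra| auto]).
          lra.
      - destruct (I0 (x + h)) as [X1 E1]. destruct (I0 x) as [X2 E2].
        rewrite X1, X2, E1, E2.
        replace ((x + h - x) / h - 1) with 0 by (field; auto).
        replace ((w (x + h) - w x) / h - Dqh) with 0 by (unfold Dqh; ring).
        rewrite He1sq. simpl. right. ring. }
    assert (0 <= (c0 + rho) * e1) by (apply Rmult_le_pos; lra).
    split; [|split]; auto.
    apply (sq_abs _ ((c0 + rho) * e1)); auto.
    assert (0 <= ((eta T (x + h) - eta T x) / h - Dqh) ^ 2) by apply pow2_ge_0. lra.
    apply (sq_abs _ ((c0 + rho) * e1)); auto.
    assert (0 <= ((xi T (x + h) - xi T x) / h - 1) ^ 2) by apply pow2_ge_0. lra. }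
  assert (Hce : c0 * e1 = c0 * exp (6 * Nw + 5)).
  { unfold e1, L. replace (2 * (3 * Nw + 2) + 1) with (6 * Nw + 5) by ring. ring. }
  destruct (cauchy_lim (fun h => (xi T (x + h) - xi T x) / h)) as [l1 Hl1].
  { intros eps Heps. destruct (Cq eps Heps) as [d [Hd Hc]]. exists d; split; auto.
    intros h h' Hh Hh' Hhd Hhd'. apply (Hc h h'); auto. }
  destruct (cauchy_lim (fun h => (eta T (x + h) - eta T x) / h)) as [l2 Hl2].
  { intros eps Heps. destruct (Cq eps Heps) as [d [Hd Hc]]. exists d; split; auto.
    intros h h' Hh Hh' Hhd Hhd'. apply (Hc h h'); auto. }
  exists l1, l2. split; [|split; [|split]].
  - intros eps Heps. destruct (Hl1 (eps / 2) ltac:(lra)) as [d [Hd Hl]]. exists (mkposreal d Hd). simpl.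
    intros h Hh Hhd. specialize (Hl h Hh Hhd). cbv beta in Hl. lra.
  - intros eps Heps. destruct (Hl2 (eps / 2) ltac:(lra)) as [d [Hd Hl]]. exists (mkposreal d Hd). simpl.
    intros h Hh Hhd. specialize (Hl h Hh Hhd). cbv beta in Hl. lra.
  - rewrite <- Hce. apply Rle_plus_epsilon. intros eps Heps.
    destruct (Dq (eps / (2 * e1)) ltac:(apply Rdiv_lt_0_compat; lra)) as [d1 [Hd1 HD]].
    destruct (Hl1 (eps / 2) ltac:(lra)) as [d2 [Hd2 Hl]].
    set (h := Rmin d1 d2 / 2).
    assert (Hm : 0 < Rmin d1 d2) by (apply Rmin_pos; auto).
    assert (Hh : h <> 0) by (unfold h; lra).
    assert (Hah : Rabs h = h) by (unfold h; apply Rabs_right; lra).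
    assert (h < d1) by (unfold h; assert (Rmin d1 d2 <= d1) by apply Rmin_l; lra).
    assert (h < d2) by (unfold h; assert (Rmin d1 d2 <= d2) by apply Rmin_r; lra).
    destruct (HD h Hh ltac:(rewrite Hah; auto)) as [HD1 _].
    specialize (Hl h Hh ltac:(rewrite Hah; auto)). cbv beta in Hl.
    assert ((c0 + eps / (2 * e1)) * e1 = c0 * e1 + eps / 2) by (field; lra).
    replace (l1 - 1) with (((xi T (x + h) - xi T x) / h - 1) - ((xi T (x + h) - xi T x) / h - l1)) by ring.
    unfold Rminus at 1. eapply Rle_trans; [apply Rabs_triang|]. rewrite Rabs_Ropp. lra.
  - rewrite <- Hce. apply Rle_plus_epsilon. intros eps Heps.
    set (rho := eps / (3 * (e1 + 1))).
    assert (Hrho : 0 < rho) by (unfold rho; apply Rdiv_lt_0_compat; lra).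
    destruct (Dq rho Hrho) as [d1 [Hd1 HD]].
    destruct (Hl2 (eps / 3) ltac:(lra)) as [d2 [Hd2 Hl]].
    set (h := Rmin d1 d2 / 2).
    assert (Hm : 0 < Rmin d1 d2) by (apply Rmin_pos; auto).
    assert (Hh : h <> 0) by (unfold h; lra).
    assert (Hah : Rabs h = h) by (unfold h; apply Rabs_right; lra).
    assert (h < d1) by (unfold h; assert (Rmin d1 d2 <= d1) by apply Rmin_l; lra).
    assert (h < d2) by (unfold h; assert (Rmin d1 d2 <= d2) by apply Rmin_r; lra).
    destruct (HD h Hh ltac:(rewrite Hah; auto)) as [_ [HD2 HD3]].
    specialize (Hl h Hh ltac:(rewrite Hah; auto)). cbv beta in Hl.
    assert (rho * (e1 + 1) = eps / 3) by (unfold rho; field; lra).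
    replace (l2 - w1 x) with (((eta T (x + h) - eta T x) / h - (w (x + h) - w x) / h)
       + ((w (x + h) - w x) / h - w1 x) - ((eta T (x + h) - eta T x) / h - l2)) by ring.
    eapply Rle_trans; [apply Rabs_triang|]. rewrite Rabs_Ropp.
    eapply Rle_trans; [apply Rplus_le_compat_r; apply Rabs_triang|].
    assert ((c0 + rho) * e1 = c0 * e1 + rho * e1) by ring. nra.
Qed.


Lemma ext_bound p a b N y : (forall z, a <= z <= b -> Rabs (p z) <= N) -> 0 <= N ->
  Rabs (ext_zero p a b y) <= N.
Proof. intros H HN. destruct (Rle_dec a y); destruct (Rle_dec y b).
  rewrite ext_in by lra. apply H; lra.
  all: rewrite ext_out by lra; rewrite Rabs_R0; lra. Qed.

Lemma prod_bound f p a b Nw N y : (forall z, a <= z <= b -> Rabs (f z) <= Nw) ->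
  (forall z, a <= z <= b -> Rabs (p z) <= N) -> 0 <= Nw -> 0 <= N ->
  Rabs (f y * ext_zero p a b y) <= Nw * N.
Proof. intros Hf Hp HNw HN. destruct (Rle_dec a y); destruct (Rle_dec y b).
  rewrite ext_in by lra. apply mul_le_abs; [apply Hf; lra| apply Hp; lra].
  all: rewrite ext_out by lra; rewrite Rmult_0_r, Rabs_R0; nra. Qed.

Lemma dpl_opp f x l : derivable_pt_lim f x l -> derivable_pt_lim (fun t => - f t) x (- l).
Proof. intros. exact (derivable_pt_lim_opp f x l H). Qed.

Theorem proposition3p7 :
  exists C : R -> R, (forall M, 0 < C M) /\
  forall (w w1 w2 w3 : R -> R),
    (* w in C^3(R), with derivatives w1, w2, w3 *)
    (forall y, derivable_pt_lim w y (w1 y)) ->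
    (forall y, derivable_pt_lim w1 y (w2 y)) ->
    (forall y, derivable_pt_lim w2 y (w3 y)) ->
    continuity w3 ->
    (* w periodic *)
    (exists T, 0 < T /\ forall y, w (y + T) = w y) ->
    (* w > 0 on [-1,1] *)
    (forall y, -1 <= y <= 1 -> 0 < w y) ->
  forall (a b : R), -1 < a -> a < b -> b < 1 ->
  forall (c : list R),
    (forall k, (k <= 3)%nat ->
       peval (pderivn k c) a = 0 /\ peval (pderivn k c) b = 0) ->
  forall (xi eta : R -> R -> R),
    (* for each x, t |-> (xi t x, eta t x) is the global solution *)
    (forall x t,
       derivable_pt_lim (fun u => xi u x) t
         (- w1 (xi t x) * phi_ext c a b (xi t x)
          - (eta t x - w (xi t x)) * dphi_ext c a b (xi t x))) ->
    (forall x t,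
       derivable_pt_lim (fun u => eta u x) t (phi_ext c a b (xi t x))) ->
    (forall x, xi 0 x = x /\ eta 0 x = w x) ->
  forall (Nw Nphi : R),
    is_sup_norm_on [w; w1; w2] a b Nw ->
    is_sup_norm_on [peval c; peval (pderiv c); peval (pderivn 2 c)] a b Nphi ->
    Nphi < 1 ->
  forall (s x t0 : R), 0 <= s <= 1 ->
    is_first_time xi eta w (phi_ext c a b) s x t0 ->
  forall t, 0 <= t <= t0 ->
    exists dxi deta : R,
      derivable_pt_lim (fun y => xi t y) x dxi /\
      derivable_pt_lim (fun y => eta t y) x deta /\
      Rabs (dxi - 1) <= C Nw * Nphi /\
      Rabs (deta - w1 x) <= C Nw * Nphi.
Proof.
  exists (fun M => (4 * Rabs M + 3) * exp (6 * Rabs M + 5)). split.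
  { intros M. apply Rmult_lt_0_compat; [pose proof (Rabs_pos M); lra| apply exp_pos]. }
  intros w w1 w2 w3 Dw Dw1 Dw2 Cw3 Hper Hpos a b Ha Hab Hb c Hc xi eta DX DE I0 Nw Nphi HNw HNphi HN1
    s x t0 Hs Hfirst t Ht.
  destruct (Hc 0%nat ltac:(lia)) as [c0a c0b]. destruct (Hc 1%nat ltac:(lia)) as [c1a c1b].
  destruct (Hc 2%nat ltac:(lia)) as [c2a c2b]. destruct (Hc 3%nat ltac:(lia)) as [c3a c3b].
  simpl in c0a, c0b, c1a, c1b.
  set (phi := phi_ext c a b) in *. set (ph1 := dphi_ext c a b) in *.
  set (ph2 := ext_zero (peval (pderivn 2 c)) a b).
  set (ph3 := ext_zero (peval (pderivn 3 c)) a b).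
  assert (Dphi : forall y, derivable_pt_lim phi y (ph1 y)).
  { unfold phi, ph1, phi_ext, dphi_ext. apply ext_deriv; auto. apply peval_deriv. }
  assert (Dph1 : forall y, derivable_pt_lim ph1 y (ph2 y)).
  { unfold ph1, ph2, dphi_ext. apply ext_deriv; auto. intros y. apply (peval_deriv (pderiv c)). }
  assert (Dph2 : forall y, derivable_pt_lim ph2 y (ph3 y)).
  { unfold ph2, ph3. apply ext_deriv; auto. intros y. apply (peval_deriv (pderivn 2 c)). }
  destruct HNphi as [Hub _]. destruct HNw as [Hubw _].
  assert (Bp0 : forall z, a <= z <= b -> Rabs (peval c z) <= Nphi).
  { intros z Hz. apply Hub. exists (peval c), z. repeat split; try lra. simpl; auto. }
  assert (Bp1 : forall z, a <= z <= b -> Rabs (peval (pderiv c) z) <= Nphi).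
  { intros z Hz. apply Hub. exists (peval (pderiv c)), z. repeat split; try lra. simpl; auto. }
  assert (Bp2 : forall z, a <= z <= b -> Rabs (peval (pderivn 2 c) z) <= Nphi).
  { intros z Hz. apply Hub. exists (peval (pderivn 2 c)), z. repeat split; try lra. simpl; auto. }
  assert (Bw0 : forall z, a <= z <= b -> Rabs (w z) <= Nw).
  { intros z Hz. apply Hubw. exists w, z. repeat split; try lra. simpl; auto. }
  assert (Bw1 : forall z, a <= z <= b -> Rabs (w1 z) <= Nw).
  { intros z Hz. apply Hubw. exists w1, z. repeat split; try lra. simpl; auto. }
  assert (Bw2 : forall z, a <= z <= b -> Rabs (w2 z) <= Nw).
  { intros z Hz. apply Hubw. exists w2, z. repeat split; try lra. simpl; auto. }
  assert (HN0 : 0 <= Nphi) by (eapply Rle_trans; [apply Rabs_pos| apply (Bp0 a); lra]).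
  assert (HW0 : 0 <= Nw) by (eapply Rle_trans; [apply Rabs_pos| apply (Bw0 a); lra]).
  assert (Bphi : forall y, Rabs (phi y) <= Nphi) by (intros; apply ext_bound; auto).
  assert (Bph1 : forall y, Rabs (ph1 y) <= Nphi) by (intros; apply ext_bound; auto).
  assert (Bph2 : forall y, Rabs (ph2 y) <= Nphi) by (intros; apply ext_bound; auto).
  set (G := fun y => - w1 y * phi y + w y * ph1 y).
  set (G' := fun y => - w2 y * phi y + w y * ph2 y).
  assert (DG : forall y, derivable_pt_lim G y (G' y)).
  { intros y. unfold G, G'.
    apply (dpl_val _ _ (((- w2 y) * phi y + (- w1 y) * ph1 y) + (w1 y * ph1 y + w y * ph2 y))); [|ring].
    apply (dpl_plus (fun t => - w1 t * phi t) (fun t => w t * ph1 t)).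
    apply (dpl_mult (fun t => - w1 t) phi). apply dpl_opp; auto. auto.
    apply dpl_mult; auto. }
  assert (BG' : forall y, Rabs (G' y) <= 2 * Nw * Nphi).
  { intros y. unfold G'. eapply Rle_trans; [apply Rabs_triang|].
    assert (Rabs (- w2 y * phi y) <= Nw * Nphi).
    { unfold phi, phi_ext. apply (prod_bound (fun z => - w2 z)); auto. intros. rewrite Rabs_Ropp; auto. }
    assert (Rabs (w y * ph2 y) <= Nw * Nphi) by (unfold ph2; apply prod_bound; auto). lra. }
  assert (Cphi : forall y, continuity_pt phi y) by (intros; eapply dpl_cont; apply Dphi).
  assert (Cph1 : forall y, continuity_pt ph1 y) by (intros; eapply dpl_cont; apply Dph1).
  assert (Cph2 : forall y, continuity_pt ph2 y) by (intros; eapply dpl_cont; apply Dph2).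
  assert (Cw : forall y, continuity_pt w y) by (intros; eapply dpl_cont; apply Dw).
  assert (Cw1 : forall y, continuity_pt w1 y) by (intros; eapply dpl_cont; apply Dw1).
  assert (Cw2 : forall y, continuity_pt w2 y) by (intros; eapply dpl_cont; apply Dw2).
  assert (Zphi : forall y, y < a \/ b < y -> phi y = 0) by (intros; unfold phi, phi_ext; apply ext_out; auto).
  assert (Zph1 : forall y, y < a \/ b < y -> ph1 y = 0) by (intros; unfold ph1, dphi_ext; apply ext_out; auto).
  assert (Zph2 : forall y, y < a \/ b < y -> ph2 y = 0) by (intros; unfold ph2; apply ext_out; auto).
  assert (UG' : UCf G').
  { intros eps Heps. apply (uc_compact G' a b); auto.
    - intros y. unfold G'. apply cpt_plus; apply cpt_mult; auto. apply cpt_opp; auto.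
    - intros y Hy. unfold G'. rewrite Zphi, Zph2 by auto. ring. }
  assert (Uph2 : UCf ph2) by (intros eps Heps; apply (uc_compact ph2 a b); auto).
  assert (Uph1 : UCf ph1) by (intros eps Heps; apply (uc_compact ph1 a b); auto).
  assert (DX' : forall y u, derivable_pt_lim (fun v => xi v y) u (G (xi u y) - eta u y * ph1 (xi u y))).
  { intros y u. eapply dpl_val; [apply DX|]. unfold G. ring. }
  destruct (Req_dec t 0) as [Ht0|Ht0].
  { subst t. exists 1, (w1 x). split; [|split; [|split]].
    - apply (dpl_ext (fun y => y)); [intros y; destruct (I0 y); auto| apply dpl_id].
    - apply (dpl_ext w); [intros y; destruct (I0 y); auto| apply Dw].
    - replace (1 - 1) with 0 by ring. rewrite Rabs_R0. apply Rmult_le_pos; [|auto].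
      left. apply Rmult_lt_0_compat; [pose proof (Rabs_pos Nw); lra| apply exp_pos].
    - replace (w1 x - w1 x) with 0 by ring. rewrite Rabs_R0. apply Rmult_le_pos; [|auto].
      left. apply Rmult_lt_0_compat; [pose proof (Rabs_pos Nw); lra| apply exp_pos]. }
  destruct Hfirst as [Ht00 [_ Hfirst]].
  assert (Hne : eta 0 x <> w (xi 0 x) + s * phi (xi 0 x)) by (apply Hfirst; lra).
  destruct (I0 x) as [X0 E0]. rewrite X0, E0 in Hne.
  assert (Hsp : s * phi x <> 0) by (intro Z; apply Hne; lra).
  assert (Hs0 : 0 < s) by (destruct (Req_dec s 0); [subst; exfalso; apply Hsp; ring| lra]).
  assert (Hp0 : phi x <> 0) by (intro Z; apply Hsp; rewrite Z; ring).
  assert (Hxab : a <= x <= b).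
  { destruct (Rle_dec a x); destruct (Rle_dec x b); try lra; exfalso; apply Hp0; apply Zphi; lra. }
  assert (Ht0s : t0 <= s).
  { apply (time_bound w w1 phi ph1 (fun u => xi u x) (fun u => eta u x) s t0); auto.
    - cbv beta. rewrite X0, E0. auto.
    - cbv beta. rewrite X0. auto. }
  destruct (main_deriv w w1 G G' phi ph1 ph2 xi eta x t Nw Nphi Dw DG Dphi Dph1 UG' Uph2 Uph1
     BG' Bphi Bph1 Bph2 HN0 HN1 HW0 (Bw0 x Hxab) (Bw1 x Hxab) DX' DE I0 ltac:(lra))
    as [dxi [deta [H1 [H2 [H3 H4]]]]].
  exists dxi, deta. cbv beta. rewrite (Rabs_right Nw) by lra.
  replace ((4 * Nw + 3) * exp (6 * Nw + 5) * Nphi) with ((4 * Nw + 3) * Nphi * exp (6 * Nw + 5)) by ring.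
  auto.
Qed.
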